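(* Let $(M,J,g)$ be a $2n$-dimensional Kähler manifold which is an asymptotic harmonic manifold up to order 2, with constants $\Lambda_1,\Lambda_2$. Then $$\Lambda_1^2-\frac{2(n+1)^2}{n+7}\Lambda_2\le 0,$$ and equality holds if and only if $M$ has constant holomorphic sectional curvature $\frac{\tau}{n(n+1)}$.
   Context: Conventions: $R(X,Y)Z=[\nabla_X,\nabla_Y]Z-\nabla_{[X,Y]}Z$; components w.r.t. a local orthonormal frame, $R_{abcd}=g(R(e_a,e_b)e_c,e_d)$, $\rho_{ij}=R_{aija}$, $\tau=\rho_{aa}$, summation over repeated indices. For $x=\xi^ie_i\in T_pM$ write $R_{axxb}=R_{aijb}\xi^i\xi^j$. A Riemannian manifold is an asymptotic harmonic manifold up to order 2 if there are real constants $\Lambda_1,\Lambda_2$ (independent of the point) such that for every $p\in M$ and every $x\in T_pM$: $R_{axxa}=\Lambda_1|x|^2$ and $R_{axxb}R_{bxxa}=\Lambda_2|x|^4$. *)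

(* Defs.v *)
(* Pointwise (algebraic) model of the curvature data of a
   Kaehler manifold, expressed in components w.r.t. a local orthonormal frame
   e_0,...,e_{2n-1} at each point p : M. *)
From HB Require Import structures.
From mathcomp Require Import all_boot all_order all_algebra.
Set Implicit Arguments. Unset Strict Implicit. Unset Printing Implicit Defensive.
Import Order.TTheory GRing.Theory Num.Theory.
Local Open Scope ring_scope.

Section Curv.
Variables (R : realFieldType) (N : nat).

(* Rm a b c d = R_{abcd} = g(R(e_a,e_b)e_c,e_d) *)
Definition curv := 'I_N -> 'I_N -> 'I_N -> 'I_N -> R.
Definition vec := 'I_N -> R.

Definition norm2 (x : vec) : R := \sum_i x i ^+ 2.

Definition curv4 (Rm : curv) (x y z w : vec) : R :=
  \sum_a \sum_b \sum_c \sum_d Rm a b c d * x a * y b * z c * w d.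

Definition Raxxb (Rm : curv) (x : vec) (a b : 'I_N) : R :=
  \sum_i \sum_j Rm a i j b * x i * x j.

Definition scal (Rm : curv) : R := \sum_a \sum_i Rm a i i a.

(* J acting on x: (Jx)^k = J_{kl} x^l, with J e_l = sum_k J_{kl} e_k *)
Definition Japp (J : 'M[R]_N) (x : vec) : vec := fun k => \sum_l J k l * x l.

Definition is_curvature_tensor (Rm : curv) : Prop :=
  [/\ forall a b c d, Rm a b c d = - Rm b a c d,
      forall a b c d, Rm a b c d = - Rm a b d c,
      forall a b c d, Rm a b c d = Rm c d a b &
      forall a b c d, Rm a b c d + Rm b c a d + Rm c a b d = 0].

Definition is_hermitian_cs (J : 'M[R]_N) : Prop :=
  J *m J = - 1%:M /\ J^T *m J = 1%:M.

(* Kaehler identity R(X,Y)JZ = J R(X,Y)Z, i.e. R(X,Y,JZ,JW) = R(X,Y,Z,W) *)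
Definition kaehler_identity (J : 'M[R]_N) (Rm : curv) : Prop :=
  forall a b c d, \sum_k \sum_l J k c * J l d * Rm a b k l = Rm a b c d.

Definition is_kaehler_curvature (J : 'M[R]_N) (Rm : curv) : Prop :=
  [/\ is_curvature_tensor Rm, is_hermitian_cs J & kaehler_identity J Rm].

Definition asymp_harmonic2_at (Rm : curv) (L1 L2 : R) : Prop :=
  forall x : vec,
    \sum_a Raxxb Rm x a a = L1 * norm2 x /\
    \sum_a \sum_b Raxxb Rm x a b * Raxxb Rm x b a = L2 * norm2 x ^+ 2.

(* constant holomorphic sectional curvature c at the point:
   H(x) = R(x,Jx,Jx,x)/|x|^4 = c for all x <> 0 *)
Definition const_holsec_at (J : 'M[R]_N) (Rm : curv) (c : R) : Prop :=
  forall x : vec, (exists i, x i != 0) ->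
    curv4 Rm x (Japp J x) (Japp J x) x = c * norm2 x ^+ 2.

End Curv.

(* Main.v *)
Require Import Defs.
From HB Require Import structures.
From mathcomp Require Import all_boot all_order all_algebra.
From mathcomp Require Import ring lra.
From Stdlib Require Import FunctionalExtensionality.
Import Order.TTheory GRing.Theory Num.Theory.
Set Implicit Arguments. Unset Strict Implicit.
Local Open Scope ring_scope.


Section Aux.
Variables (R : realFieldType) (N : nat).
Implicit Types (T : curv R N) (x y z w : vec R N).

Definition ev (a : 'I_N) : vec R N := fun i => (i == a)%:R.
Definition vadd (x y : vec R N) : vec R N := fun i => x i + y i.
Definition vscal (t : R) (x : vec R N) : vec R N := fun i => t * x i.

Lemma sum_ev (F : 'I_N -> R) a : \sum_i F i * ev a i = F a.
Proof.
rewrite (bigD1 a) //= /ev eqxx mulr1 big1 ?addr0 // => i /negbTE ->.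
by rewrite mulr0.
Qed.

Ltac c4split := rewrite /curv4 -big_split; apply: eq_bigr => ? _; rewrite -big_split; apply: eq_bigr => ? _;
  rewrite -big_split; apply: eq_bigr => ? _; rewrite -big_split; apply: eq_bigr => ? _ /=;
  rewrite /vadd; ring.
Ltac c4scal := rewrite /curv4 mulr_sumr; apply: eq_bigr => ? _; rewrite mulr_sumr; apply: eq_bigr => ? _;
  rewrite mulr_sumr; apply: eq_bigr => ? _; rewrite mulr_sumr; apply: eq_bigr => ? _ /=;
  rewrite /vscal; ring.

Lemma c4_add1 T x x' y z w : curv4 T (vadd x x') y z w = curv4 T x y z w + curv4 T x' y z w.
Proof. c4split. Qed.
Lemma c4_add2 T x y y' z w : curv4 T x (vadd y y') z w = curv4 T x y z w + curv4 T x y' z w.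
Proof. c4split. Qed.
Lemma c4_add3 T x y z z' w : curv4 T x y (vadd z z') w = curv4 T x y z w + curv4 T x y z' w.
Proof. c4split. Qed.
Lemma c4_add4 T x y z w w' : curv4 T x y z (vadd w w') = curv4 T x y z w + curv4 T x y z w'.
Proof. c4split. Qed.
Lemma c4_scal1 T t x y z w : curv4 T (vscal t x) y z w = t * curv4 T x y z w.
Proof. c4scal. Qed.
Lemma c4_scal2 T t x y z w : curv4 T x (vscal t y) z w = t * curv4 T x y z w.
Proof. c4scal. Qed.
Lemma c4_scal3 T t x y z w : curv4 T x y (vscal t z) w = t * curv4 T x y z w.
Proof. c4scal. Qed.
Lemma c4_scal4 T t x y z w : curv4 T x y z (vscal t w) = t * curv4 T x y z w.
Proof. c4scal. Qed.

Lemma c4_tadd T T' x y z w : curv4 (fun a b c d => T a b c d + T' a b c d) x y z w =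
  curv4 T x y z w + curv4 T' x y z w.
Proof. c4split. Qed.
Lemma c4_tscal t T x y z w : curv4 (fun a b c d => t * T a b c d) x y z w = t * curv4 T x y z w.
Proof. c4scal. Qed.
Lemma c4_ext T T' x y z w : (forall a b c d, T a b c d = T' a b c d) ->
  curv4 T x y z w = curv4 T' x y z w.
Proof. by move=> H; rewrite /curv4; do 4! (apply: eq_bigr => ? _); rewrite H. Qed.
Lemma c4_zero x y z w : curv4 (fun _ _ _ _ => 0 : R) x y z w = 0.
Proof. by rewrite /curv4; do 4! (apply: big1 => ? _); rewrite !mul0r. Qed.

Lemma c4_ev T a b c d : curv4 T (ev a) (ev b) (ev c) (ev d) = T a b c d.
Proof.
rewrite /curv4.
under eq_bigr do under eq_bigr do under eq_bigr do rewrite sum_ev.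
under eq_bigr do under eq_bigr do rewrite sum_ev.
under eq_bigr do rewrite sum_ev.
by rewrite sum_ev.
Qed.

Definition P4 T x := curv4 T x x x x.

Lemma polar2 T x y :
  P4 T (vadd x y) + P4 T (vadd x (vscal (-1) y)) =
  2 * (P4 T x + P4 T y + (curv4 T x x y y + curv4 T x y x y + curv4 T x y y x
     + curv4 T y x x y + curv4 T y x y x + curv4 T y y x x)).
Proof.
rewrite /P4 !(c4_add1, c4_add2, c4_add3, c4_add4) !(c4_scal1, c4_scal2, c4_scal3, c4_scal4).
ring.
Qed.

End Aux.
Arguments ev {R N} a.


Section Aux2.
Variables (R : realFieldType) (N : nat).
Implicit Types (T : curv R N) (x y z w : vec R N).

Ltac fin4 := do 4! (apply: eq_bigr => ? _); ring.

Lemma c4_sw12 T x y z w : curv4 T y x z w = curv4 (fun a b c d => T b a c d) x y z w.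
Proof. rewrite /curv4 exchange_big /=; fin4. Qed.

Lemma c4_sw34 T x y z w : curv4 T x y w z = curv4 (fun a b c d => T a b d c) x y z w.
Proof.
rewrite /curv4; under eq_bigr do under eq_bigr do rewrite exchange_big /=; fin4.
Qed.

Lemma c4_pair T x y z w : curv4 T z w x y = curv4 (fun a b c d => T c d a b) x y z w.
Proof.
rewrite /curv4.
under eq_bigr do rewrite exchange_big /=.
rewrite exchange_big /=.
under eq_bigr do under eq_bigr do rewrite exchange_big /=.
under eq_bigr do rewrite exchange_big /=.
fin4.
Qed.

Lemma c4_cyc T x y z w : curv4 T y z x w = curv4 (fun a b c d => T b c a d) x y z w.
Proof.
rewrite /curv4.
under eq_bigr do rewrite exchange_big /=.
rewrite exchange_big /=.
fin4.
Qed.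

End Aux2.


Section Aux3.
Variables (R : realFieldType) (N : nat).
Implicit Types (T : curv R N) (x y z w : vec R N) (J : 'M[R]_N).

Lemma sum_dl (F : 'I_N -> R) a : \sum_i (a == i)%:R * F i = F a.
Proof.
rewrite (bigD1 a) //= eqxx mul1r big1 ?addr0 // => i; rewrite eq_sym => /negbTE ->.
by rewrite mul0r.
Qed.
Lemma sum_dr (F : 'I_N -> R) a : \sum_i (i == a)%:R * F i = F a.
Proof. by under eq_bigr do rewrite eq_sym; rewrite sum_dl. Qed.

Section J.
Variable J : 'M[R]_N.
Hypothesis HJ : is_hermitian_cs J.

Lemma J_tr : J^T = - J.
Proof.
case: HJ => H1 H2.
by rewrite -[J^T]mulmx1 -[1%:M]opprK -H1 mulmxN mulmxA H2 mul1mx.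
Qed.

Lemma J_asym a b : J a b = - J b a.
Proof. by have := congr1 (fun M : 'M[R]_N => M b a) J_tr; rewrite !mxE. Qed.

Lemma J_diag a : J a a = 0.
Proof. have := J_asym a a; move/eqP; rewrite -addr_eq0 -mulr2n mulrn_eq0 /=. by move/eqP. Qed.

Lemma JJ a b : \sum_k J a k * J k b = - (a == b)%:R.
Proof. case: HJ => H1 _; have := congr1 (fun M : 'M[R]_N => M a b) H1; by rewrite !mxE. Qed.

Lemma JtJ a b : \sum_k J k a * J k b = (a == b)%:R.
Proof. case: HJ => _ H2; have := congr1 (fun M : 'M[R]_N => M a b) H2; rewrite !mxE => <-.
by apply: eq_bigr => k _; rewrite mxE. Qed.

Lemma JJt a b : \sum_k J a k * J b k = (a == b)%:R.
Proof. rewrite -[RHS]opprK -JJ -sumrN; apply: eq_bigr => k _; rewrite (J_asym b k); ring. Qed.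

Lemma JJapp x : Japp J (Japp J x) = vscal (-1) x.
Proof.
rewrite /Japp /vscal; apply: functional_extensionality_dep => k.
under eq_bigr do rewrite mulr_sumr.
rewrite exchange_big /=.
under eq_bigr do under eq_bigr do rewrite mulrA.
under eq_bigr do rewrite -mulr_suml JJ mulNr.
by rewrite sumrN sum_dl mulN1r.
Qed.
End J.

Lemma c4_J3 T J x y z w : curv4 T x y (Japp J z) w =
  curv4 (fun a b c d => \sum_k T a b k d * J k c) x y z w.
Proof.
rewrite /curv4 /Japp; apply: eq_bigr => a _; apply: eq_bigr => b _.
under eq_bigr do under eq_bigr do rewrite mulr_sumr mulr_suml.
under eq_bigr do rewrite exchange_big /=.
rewrite exchange_big /=.
under [RHS]eq_bigr do under eq_bigr do rewrite !mulr_suml.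
under [RHS]eq_bigr do rewrite exchange_big /=.
do 3! (apply: eq_bigr => ? _); ring.
Qed.

Lemma c4_J4 T J x y z w : curv4 T x y z (Japp J w) =
  curv4 (fun a b c d => \sum_l T a b c l * J l d) x y z w.
Proof.
rewrite /curv4 /Japp; apply: eq_bigr => a _; apply: eq_bigr => b _; apply: eq_bigr => c _.
under eq_bigr do rewrite mulr_sumr.
rewrite exchange_big /=.
under [RHS]eq_bigr do rewrite !mulr_suml.
do 2! (apply: eq_bigr => ? _); ring.
Qed.

Section CT.
Variable T : curv R N.
Hypothesis HT : is_curvature_tensor T.

Lemma v_sw12 x y z w : curv4 T y x z w = - curv4 T x y z w.
Proof.
case: HT => H1 _ _ _.
rewrite c4_sw12 (@c4_ext _ _ _ (fun a b c d => -1 * T a b c d)) ?c4_tscal ?mulN1r //.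
by move=> a b c d; rewrite H1 mulN1r.
Qed.

Lemma v_sw34 x y z w : curv4 T x y w z = - curv4 T x y z w.
Proof.
case: HT => _ H1 _ _.
rewrite c4_sw34 (@c4_ext _ _ _ (fun a b c d => -1 * T a b c d)) ?c4_tscal ?mulN1r //.
by move=> a b c d; rewrite H1 mulN1r.
Qed.

Lemma v_pair x y z w : curv4 T z w x y = curv4 T x y z w.
Proof.
case: HT => _ _ H1 _.
rewrite c4_pair (@c4_ext _ _ _ T) //.
Qed.

Lemma v_bian x y z w : curv4 T x y z w + curv4 T y z x w + curv4 T z x y w = 0.
Proof.
case: HT => _ _ _ H1.
rewrite (c4_cyc T x y z w) (etrans (c4_cyc T y z x w) (c4_cyc _ x y z w)).
rewrite -!c4_tadd -(@c4_zero _ _ x y z w).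
by apply: c4_ext => a b c d /=.
Qed.

End CT.

Lemma v_kahler T J x y z w : kaehler_identity J T ->
  curv4 T x y (Japp J z) (Japp J w) = curv4 T x y z w.
Proof.
move=> HK; rewrite c4_J4 c4_J3; apply: c4_ext => a b c d.
rewrite -HK; under eq_bigr do rewrite mulr_suml.
apply: eq_bigr => k _; apply: eq_bigr => l _; ring.
Qed.

End Aux3.


Section Aux4.
Variables (R : realFieldType) (N : nat).
Implicit Types (T : curv R N) (x y z w : vec R N) (J : 'M[R]_N).

Lemma Japp_add J x y : Japp J (vadd x y) = vadd (Japp J x) (Japp J y).
Proof.
apply: functional_extensionality_dep => k; rewrite /Japp /vadd /= -big_split /=.
by apply: eq_bigr => l _; ring.
Qed.
Lemma Japp_scal J t x : Japp J (vscal t x) = vscal t (Japp J x).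
Proof.
apply: functional_extensionality_dep => k; rewrite /Japp /vscal /= mulr_sumr.
by apply: eq_bigr => l _; ring.
Qed.

Section Conv.
Variables (B : curv R N) (J : 'M[R]_N).
Hypotheses (HB : is_curvature_tensor B) (HJ : is_hermitian_cs J) (HK : kaehler_identity J B).
Hypothesis H0 : forall x, curv4 B x (Japp J x) (Japp J x) x = 0.

Let G x1 x2 x3 x4 := curv4 B x1 (Japp J x2) (Japp J x3) x4.
Let K x y := curv4 B x y y x.

Lemma c2_zero x y : G x x y y + G x y x y + G x y y x + G y x x y + G y x y x + G y y x x = 0.
Proof.
have := H0 (vadd x y); have := H0 (vadd x (vscal (-1) y)); have := H0 x; have := H0 y.
rewrite /G !Japp_add !Japp_scal !(c4_add1, c4_add2, c4_add3, c4_add4)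
  !(c4_scal1, c4_scal2, c4_scal3, c4_scal4).
move=> e1 e2 e3 e4.
lra.
Qed.

Lemma c2_form x y : G x x y y + G x y x y + G x y y x + G y x x y + G y x y x + G y y x x
  = 2 * K x y + 6 * K x (Japp J y).
Proof.
rewrite /G /K.
set JX := Japp J x; set JY := Japp J y.
have a1 := v_pair HB JX x y JY.
have b1 := v_sw12 HB x JX y JY.
have c1 := v_sw34 HB x JX JY y.
have d1 := v_kahler x JY JX y HK.
have d2 := v_sw34 HB x JY x JY.
have e1 := v_pair HB JY x y JX.
have e2 := v_sw12 HB x JY y JX.
have e3 := v_sw34 HB x JY JX y.
have f1 := v_kahler y JX JX y HK.
have f2 := v_sw12 HB JX y x JY.
have f3 := v_pair HB x JY JX y.
have g1 := v_bian HB x JX JY y.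
have g2 := v_pair HB x y JX JY.
have g3 := v_kahler x y x y HK.
have g4 := v_sw34 HB x y y x.
have g5 := v_sw12 HB x JY JX y.
rewrite /JX (JJapp HJ) c4_scal3 -/JX -/JY in d1.
rewrite /JX (JJapp HJ) c4_scal3 -/JX -/JY in f1.
rewrite -/JX -/JY in g3.
lra.
Qed.

Lemma K_zero x y : K x y = 0.
Proof.
have h1 := c2_form x y; have h2 := c2_form x (Japp J y).
rewrite !c2_zero in h1 h2.
rewrite /K (JJapp HJ) c4_scal2 c4_scal3 -/(K x y) in h2.
rewrite /K in h1 h2 *; lra.
Qed.

Lemma L5a a d y : curv4 B (ev a) y y (ev d) = 0.
Proof.
have h := K_zero (vadd (ev a) (ev d)) y.
rewrite /K c4_add1 !c4_add4 in h.
have h1 := K_zero (ev a) y; have h2 := K_zero (ev d) y.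
have p1 := v_pair HB y (ev a) (ev d) y.
have p2 := v_sw12 HB (ev a) y (ev d) y.
have p3 := v_sw34 HB (ev a) y y (ev d).
rewrite /K in h1 h2; lra.
Qed.

Lemma B_zero a b c d : B a b c d = 0.
Proof.
have L5b : forall a b c d, B a b c d + B a c b d = 0.
  move=> a' b' c' d'.
  have h := L5a a' d' (vadd (ev b') (ev c')).
  rewrite c4_add2 !c4_add3 (L5a a' d' (ev b')) (L5a a' d' (ev c')) !c4_ev in h.
  by rewrite -h add0r addr0.
case: HB => s12 _ _ bi.
have h1 := bi a b c d.
have h2 := L5b c a b d; have h3 := L5b c b a d.
have h4 := s12 c a b d; have h5 := s12 b c a d; have h6 := s12 a c b d.
have h7 := L5b a b c d.
lra.
Qed.

End Conv.
End Aux4.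


Section Aux5.
Variables (R : realFieldType) (N : nat).
Implicit Types (T : curv R N) (x y z w : vec R N) (J : 'M[R]_N).

Lemma S01 (F : 'I_N -> 'I_N -> 'I_N -> 'I_N -> R) :
  \sum_a \sum_b \sum_c \sum_d F a b c d = \sum_a \sum_b \sum_c \sum_d F b a c d.
Proof. by rewrite exchange_big. Qed.
Lemma S12 (F : 'I_N -> 'I_N -> 'I_N -> 'I_N -> R) :
  \sum_a \sum_b \sum_c \sum_d F a b c d = \sum_a \sum_b \sum_c \sum_d F a c b d.
Proof. by apply: eq_bigr => a _; rewrite exchange_big. Qed.
Lemma S23 (F : 'I_N -> 'I_N -> 'I_N -> 'I_N -> R) :
  \sum_a \sum_b \sum_c \sum_d F a b c d = \sum_a \sum_b \sum_c \sum_d F a b d c.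
Proof. by apply: eq_bigr => a _; apply: eq_bigr => b _; rewrite exchange_big. Qed.

Definition bil (P : 'I_N -> 'I_N -> R) x y := \sum_i \sum_j P i j * x i * y j.
Definition ip x y := \sum_i x i * y i.

Lemma bil_prod P Q x y z w : bil P x y * bil Q z w =
  \sum_a \sum_b \sum_c \sum_d P a b * Q c d * x a * y b * z c * w d.
Proof.
rewrite /bil big_distrl; apply: eq_bigr => a _; rewrite big_distrl; apply: eq_bigr => b _.
rewrite big_distrr; apply: eq_bigr => c _; rewrite big_distrr; apply: eq_bigr => d _ /=.
ring.
Qed.

Lemma pat_bc_ad P Q x y z w :
  curv4 (fun a b c d => P b c * Q a d) x y z w = bil P y z * bil Q x w.
Proof.
rewrite bil_prod /curv4.
rewrite S01 S12.
do 4! (apply: eq_bigr => ? _); ring.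
Qed.

Lemma pat_ac_bd P Q x y z w :
  curv4 (fun a b c d => P a c * Q b d) x y z w = bil P x z * bil Q y w.
Proof. rewrite bil_prod /curv4 S12; do 4! (apply: eq_bigr => ? _); ring. Qed.

Lemma pat_ab_dc P Q x y z w :
  curv4 (fun a b c d => P a b * Q d c) x y z w = bil P x y * bil Q w z.
Proof. rewrite bil_prod /curv4 S23; do 4! (apply: eq_bigr => ? _); ring. Qed.

Definition dl (a b : 'I_N) : R := (a == b)%:R.

Lemma bil_dl u v : bil dl u v = ip u v.
Proof.
rewrite /bil /ip; apply: eq_bigr => i _.
under eq_bigr do rewrite /dl -mulrA.
by rewrite sum_dl.
Qed.

Lemma bil_J J u v : bil (fun i j => J i j) u v = ip u (Japp J v).
Proof.
rewrite /bil /ip /Japp; apply: eq_bigr => i _; rewrite mulr_sumr.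
by apply: eq_bigr => j _; ring.
Qed.

Lemma bil_Jt J u v : bil (fun i j => J j i) u v = ip (Japp J u) v.
Proof.
rewrite /bil /ip /Japp exchange_big; apply: eq_bigr => j _; rewrite mulr_suml.
by apply: eq_bigr => i _; ring.
Qed.

Definition R0 J : curv R N := fun a b c d =>
  dl b c * dl a d - dl a c * dl b d + J c b * J d a - J c a * J d b + 2 * (J a b * J d c).

Lemma c4_R0 J x y z w : curv4 (R0 J) x y z w =
  ip y z * ip x w - ip x z * ip y w + ip (Japp J y) z * ip (Japp J x) w
  - ip (Japp J x) z * ip (Japp J y) w + 2 * (ip x (Japp J y) * ip w (Japp J z)).
Proof.
rewrite (@c4_ext _ _ _ (fun a b c d =>
   (fun a b c d => (fun a b c d => (fun a b c d =>
      dl b c * dl a d + (-1) * (dl a c * dl b d)) a b c d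
   + (fun b c => J c b) b c * (fun a d => J d a) a d) a b c d
   + (-1) * ((fun a c => J c a) a c * (fun b d => J d b) b d)) a b c d
   + 2 * ((fun a b => J a b) a b * (fun d c => J d c) d c))); last first.
  by move=> a b c d; rewrite /R0; ring.
rewrite !c4_tadd !c4_tscal pat_bc_ad pat_ac_bd pat_bc_ad pat_ac_bd pat_ab_dc.
rewrite !bil_dl !bil_Jt !bil_J; ring.
Qed.

End Aux5.
Arguments dl {R N}.


Section Aux6.
Variables (R : realFieldType) (N : nat).
Implicit Types (T : curv R N) (x y z w u v : vec R N).

Lemma ip_sym u v : ip u v = ip v u.
Proof. by rewrite /ip; apply: eq_bigr => i _; rewrite mulrC. Qed.

Lemma ip_scall t u v : ip (vscal t u) v = t * ip u v.
Proof. by rewrite /ip /vscal mulr_sumr; apply: eq_bigr => i _; rewrite mulrA. Qed.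
Lemma ip_scalr t u v : ip u (vscal t v) = t * ip u v.
Proof. by rewrite /ip /vscal mulr_sumr; apply: eq_bigr => i _; ring. Qed.

Section J.
Variable J : 'M[R]_N.
Hypothesis HJ : is_hermitian_cs J.

Lemma ip_JJ u v : ip (Japp J u) (Japp J v) = ip u v.
Proof.
rewrite /ip /Japp.
under eq_bigr do rewrite big_distrl /=.
under eq_bigr do under eq_bigr do rewrite big_distrr /=.
rewrite exchange_big /=.
under eq_bigr do rewrite exchange_big /=.
apply: eq_bigr => k _.
transitivity (\sum_l (\sum_i J i k * J i l) * (u k * v l)).
  by apply: eq_bigr => l _; rewrite mulr_suml; apply: eq_bigr => i _; ring.
under eq_bigr do rewrite JtJ //.
by rewrite sum_dl.
Qed.

Lemma ip_Jr u v : ip u (Japp J v) = - ip (Japp J u) v.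
Proof.
rewrite /ip /Japp -sumrN.
under eq_bigr do rewrite mulr_sumr.
under [RHS]eq_bigr do rewrite mulr_suml -sumrN.
rewrite [RHS]exchange_big /=.
apply: eq_bigr => i _; apply: eq_bigr => l _.
rewrite (J_asym HJ l i); ring.
Qed.

Lemma ip_J0 u : ip u (Japp J u) = 0.
Proof.
have h := ip_Jr u u; rewrite [ip (Japp J u) u]ip_sym in h.
lra.
Qed.

Lemma R0_kahler_v x y z w : curv4 (R0 J) x y (Japp J z) (Japp J w) = curv4 (R0 J) x y z w.
Proof.
rewrite !c4_R0 !ip_JJ !ip_Jr; ring.
Qed.

Lemma R0_holo x : curv4 (R0 J) x (Japp J x) (Japp J x) x = 4 * norm2 x ^+ 2.
Proof.
have n2 : norm2 x = ip x x by rewrite /norm2 /ip; apply: eq_bigr => i _; rewrite expr2.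
rewrite c4_R0 n2 !(JJapp HJ) !ip_JJ !ip_scall !ip_scalr.
rewrite (ip_sym (Japp J x) x) !ip_J0.
ring.
Qed.

Lemma R0_kahler : kaehler_identity J (R0 J).
Proof.
move=> a b c d.
have := R0_kahler_v (ev a) (ev b) (ev c) (ev d).
rewrite c4_J4 c4_J3 !c4_ev => <-.
under [RHS]eq_bigr do rewrite mulr_suml.
apply: eq_bigr => k _; apply: eq_bigr => l _; ring.
Qed.

Lemma R0_curv : is_curvature_tensor (R0 J).
Proof.
have dS : forall i j : 'I_N, dl i j = dl j i :> R by move=> i j; rewrite /dl eq_sym.
have JA := J_asym HJ.
split => a b c d; rewrite /R0.
- rewrite (JA b a); ring.
- rewrite (JA c d) (dS b d) (dS a d); ring.
- rewrite (dS d a) (dS c b) (dS c a) (dS d b) (JA a d) (JA b c) (JA a c) (JA b d) (JA c d) (JA b a).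
  ring.
- rewrite (dS c a) (dS b a) (dS c b) (JA c b) (JA d a) (JA c a) (JA d b) (JA d c) (JA b a).
  ring.
Qed.

End J.
End Aux6.


Section Aux7.
Variables (R : realFieldType) (N : nat).
Implicit Types (T : curv R N).

Definition inner4 (T T' : curv R N) :=
  \sum_a \sum_b \sum_c \sum_d T a b c d * T' a b c d.

Lemma sum4_add (F G : 'I_N -> 'I_N -> 'I_N -> 'I_N -> R) :
  \sum_a \sum_b \sum_c \sum_d (F a b c d + G a b c d) =
  \sum_a \sum_b \sum_c \sum_d F a b c d + \sum_a \sum_b \sum_c \sum_d G a b c d.
Proof.
rewrite -big_split; apply: eq_bigr => a _; rewrite -big_split; apply: eq_bigr => b _.
rewrite -big_split; apply: eq_bigr => c _; by rewrite -big_split.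
Qed.
Lemma sum4_scal k (F : 'I_N -> 'I_N -> 'I_N -> 'I_N -> R) :
  \sum_a \sum_b \sum_c \sum_d (k * F a b c d) = k * \sum_a \sum_b \sum_c \sum_d F a b c d.
Proof.
rewrite mulr_sumr; apply: eq_bigr => a _; rewrite mulr_sumr; apply: eq_bigr => b _.
rewrite mulr_sumr; apply: eq_bigr => c _; by rewrite mulr_sumr.
Qed.

Section K.
Variables (T : curv R N) (J : 'M[R]_N).
Hypotheses (HT : is_curvature_tensor T) (HJ : is_hermitian_cs J) (HK : kaehler_identity J T).

Lemma KM1 p q u v : \sum_c \sum_d J c u * T p q c d * J d v = T p q u v.
Proof. rewrite -HK; apply: eq_bigr => c _; apply: eq_bigr => d _; ring. Qed.
Lemma KM2 p q u v : \sum_c \sum_d J u c * T p q c d * J d v = - T p q u v.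
Proof.
rewrite -KM1 -sumrN; apply: eq_bigr => c _; rewrite -sumrN; apply: eq_bigr => d _.
rewrite (J_asym HJ u c); ring.
Qed.

Lemma sw34i a b : T a b a b = - T a b b a.
Proof. by case: HT => _ H _ _; rewrite H. Qed.

Lemma A1 : \sum_a \sum_b \sum_c \sum_d (T a b c d * (dl b c * dl a d)) = scal T.
Proof.
rewrite /scal; apply: eq_bigr => a _; apply: eq_bigr => b _.
transitivity (\sum_c (b == c)%:R * \sum_d (a == d)%:R * T a b c d).
  apply: eq_bigr => c _; rewrite mulr_sumr; apply: eq_bigr => d _; rewrite /dl; ring.
under eq_bigr do rewrite sum_dl.
by rewrite sum_dl.
Qed.

Lemma A2 : \sum_a \sum_b \sum_c \sum_d (T a b c d * (dl a c * dl b d)) = - scal T.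
Proof.
rewrite /scal -sumrN; apply: eq_bigr => a _; rewrite -sumrN; apply: eq_bigr => b _.
transitivity (\sum_c (a == c)%:R * \sum_d (b == d)%:R * T a b c d).
  apply: eq_bigr => c _; rewrite mulr_sumr; apply: eq_bigr => d _; rewrite /dl; ring.
under eq_bigr do rewrite sum_dl.
by rewrite sum_dl sw34i.
Qed.

Lemma A3 : \sum_a \sum_b \sum_c \sum_d (T a b c d * (J c b * J d a)) = scal T.
Proof.
rewrite /scal; apply: eq_bigr => a _; apply: eq_bigr => b _.
rewrite -KM1; apply: eq_bigr => c _; apply: eq_bigr => d _; ring.
Qed.

Lemma A4 : \sum_a \sum_b \sum_c \sum_d (T a b c d * (J c a * J d b)) = - scal T.
Proof.
rewrite /scal -sumrN; apply: eq_bigr => a _; rewrite -sumrN; apply: eq_bigr => b _.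
rewrite -sw34i -KM1; apply: eq_bigr => c _; apply: eq_bigr => d _; ring.
Qed.

Lemma Y1 : \sum_a \sum_b \sum_c \sum_d (T b c a d * J a b * J d c) = - scal T.
Proof.
rewrite S01 S12 /scal -sumrN; apply: eq_bigr => a _; rewrite -sumrN; apply: eq_bigr => b _.
rewrite -sw34i -KM1; apply: eq_bigr => c _; apply: eq_bigr => d _; ring.
Qed.

Lemma Y2 : \sum_a \sum_b \sum_c \sum_d (T c a b d * J a b * J d c) = - scal T.
Proof.
rewrite S12 S01 /scal -sumrN; apply: eq_bigr => a _; rewrite -sumrN; apply: eq_bigr => b _.
rewrite -KM2; apply: eq_bigr => c _; apply: eq_bigr => d _; ring.
Qed.

Lemma A5 : \sum_a \sum_b \sum_c \sum_d (T a b c d * (J a b * J d c)) = 2 * scal T.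
Proof.
case: HT => _ _ _ bi.
transitivity (\sum_a \sum_b \sum_c \sum_d ((-1) * (T b c a d * J a b * J d c)
   + (-1) * (T c a b d * J a b * J d c))).
  do 4! (apply: eq_bigr => ? _).
  match goal with |- T ?a ?b ?c ?d * _ = _ => have := bi a b c d end.
  move=> h; rewrite -[T _ _ _ _](subr0) -h; ring.
rewrite sum4_add !sum4_scal Y1 Y2; ring.
Qed.

Lemma inner_R0 : inner4 T (R0 J) = 8 * scal T.
Proof.
rewrite /inner4.
transitivity (\sum_a \sum_b \sum_c \sum_d (
   T a b c d * (dl b c * dl a d) + (-1) * (T a b c d * (dl a c * dl b d))
   + T a b c d * (J c b * J d a) + (-1) * (T a b c d * (J c a * J d b))
   + 2 * (T a b c d * (J a b * J d c)))).
  by do 4! (apply: eq_bigr => ? _); rewrite /R0; ring.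
rewrite !sum4_add !sum4_scal A1 A2 A3 A4 A5; ring.
Qed.

End K.

Lemma Xlem T : is_curvature_tensor T ->
  2 * (\sum_a \sum_b \sum_c \sum_d (T a b c d * T a c b d)) = inner4 T T.
Proof.
case=> s12 s34 pr bi.
have e1 : \sum_a \sum_b \sum_c \sum_d (T a b c d * T a c b d) =
  \sum_a \sum_b \sum_c \sum_d ((-1) * (T a b c d * T b a c d)) +
  (-1) * \sum_a \sum_b \sum_c \sum_d (T a b d c * T a d b c).
  rewrite -sum4_scal -sum4_add.
  apply: eq_bigr => a _; apply: eq_bigr => b _; apply: eq_bigr => c _; apply: eq_bigr => d _.
  have h := bi a c b d.
  have h' : T a c b d = - T c b a d - T b a c d by lra.
  rewrite h' (s12 c b a d) (pr b c a d) (s34 a b d c); ring.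
have e2 : \sum_a \sum_b \sum_c \sum_d (T a b d c * T a d b c) =
   \sum_a \sum_b \sum_c \sum_d (T a b c d * T a c b d) by rewrite S23.
have e3 : \sum_a \sum_b \sum_c \sum_d ((-1) * (T a b c d * T b a c d)) = inner4 T T.
  apply: eq_bigr => a _; apply: eq_bigr => b _; apply: eq_bigr => c _; apply: eq_bigr => d _.
  rewrite (s12 b a c d); ring.
lra.
Qed.

End Aux7.


Section Aux8.
Variables (R : realFieldType) (N : nat).
Implicit Types (T : curv R N) (x y z w : vec R N) (P : 'I_N -> 'I_N -> R).

Lemma bil_add1 P x x' y : bil P (vadd x x') y = bil P x y + bil P x' y.
Proof.
rewrite /bil -big_split; apply: eq_bigr => i _; rewrite -big_split.
by apply: eq_bigr => j _; rewrite /vadd /=; ring.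
Qed.
Lemma bil_add2 P x y y' : bil P x (vadd y y') = bil P x y + bil P x y'.
Proof.
rewrite /bil -big_split; apply: eq_bigr => i _; rewrite -big_split.
by apply: eq_bigr => j _; rewrite /vadd /=; ring.
Qed.
Lemma bil_ev P i j : bil P (ev i) (ev j) = P i j.
Proof.
rewrite /bil.
under eq_bigr do rewrite sum_ev.
by rewrite sum_ev.
Qed.

Lemma norm2_bil x : norm2 x = bil dl x x.
Proof. by rewrite bil_dl /norm2 /ip; apply: eq_bigr => i _; rewrite expr2. Qed.

Lemma dl_sym (i j : 'I_N) : dl i j = dl j i :> R.
Proof. by rewrite /dl eq_sym. Qed.
Lemma dl_sq (i j : 'I_N) : dl i j * dl i j = dl i j :> R.
Proof. by rewrite /dl; case: (i == j); rewrite ?mulr1 ?mulr0. Qed.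
Lemma dl_ii (i : 'I_N) : dl i i = 1 :> R.
Proof. by rewrite /dl eqxx. Qed.

Definition rho T (i j : 'I_N) := \sum_a T a i j a.

Lemma ric_quad T x : \sum_a Raxxb T x a a = bil (rho T) x x.
Proof.
rewrite /Raxxb /bil /rho exchange_big /=.
apply: eq_bigr => i _; rewrite exchange_big /=; apply: eq_bigr => j _.
by rewrite !mulr_suml.
Qed.

Lemma einstein T L1 : is_curvature_tensor T ->
  (forall x, \sum_a Raxxb T x a a = L1 * norm2 x) ->
  forall i j, rho T i j = L1 * dl i j.
Proof.
case=> s12 s34 pr _ H i j.
have rs : forall i j, rho T i j = rho T j i.
  move=> i' j'; rewrite /rho; apply: eq_bigr => a _.
  by rewrite pr s12 s34 opprK.
have h1 := H (ev i); have h2 := H (ev j); have h3 := H (vadd (ev i) (ev j)).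
rewrite ric_quad norm2_bil !bil_ev in h1.
rewrite ric_quad norm2_bil !bil_ev in h2.
rewrite ric_quad norm2_bil !bil_add1 !bil_add2 !bil_ev in h3.
rewrite !dl_ii in h1; rewrite !dl_ii in h2; rewrite !dl_ii in h3; rewrite (rs j i) (dl_sym j i) in h3.
lra.
Qed.

End Aux8.
Arguments dl_sym {R N}.
Arguments dl_sq {R N}.
Arguments dl_ii {R N}.


Section Aux9.
Variables (R : realFieldType) (N : nat).
Implicit Types (T : curv R N) (x y z w : vec R N).

Lemma pull1 (G : 'I_N -> 'I_N -> 'I_N -> 'I_N -> 'I_N -> R) :
  \sum_i \sum_j \sum_k \sum_l \sum_a G i j k l a =
  \sum_a \sum_i \sum_j \sum_k \sum_l G i j k l a.
Proof.
under eq_bigr do under eq_bigr do under eq_bigr do rewrite exchange_big /=.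
under eq_bigr do under eq_bigr do rewrite exchange_big /=.
under eq_bigr do rewrite exchange_big /=.
by rewrite exchange_big.
Qed.

Definition TT T : curv R N := fun i j k l => \sum_a \sum_b T a i j b * T b k l a.

Lemma quart T x : \sum_a \sum_b Raxxb T x a b * Raxxb T x b a = P4 (TT T) x.
Proof.
rewrite /P4 /curv4 /TT.
under [RHS]eq_bigr do under eq_bigr do under eq_bigr do under eq_bigr do
  rewrite !mulr_suml.
under [RHS]eq_bigr do under eq_bigr do under eq_bigr do under eq_bigr do
  under eq_bigr do rewrite !mulr_suml.
rewrite pull1.
under [RHS]eq_bigr do rewrite pull1.
apply: eq_bigr => a _; apply: eq_bigr => b _.
rewrite /Raxxb big_distrl; apply: eq_bigr => i _; rewrite big_distrl; apply: eq_bigr => j _.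
rewrite big_distrr; apply: eq_bigr => k _; rewrite big_distrr; apply: eq_bigr => l _ /=.
ring.
Qed.

Lemma six_basis T i k : P4 T (vadd (ev i) (ev k)) + P4 T (vadd (ev i) (vscal (-1) (ev k))) =
  2 * (T i i i i + T k k k k + (T i i k k + T i k i k + T i k k i + T k i i k + T k i k i + T k k i i)).
Proof. by rewrite polar2 /P4 !c4_ev. Qed.

Definition UU (L2 : R) : curv R N := fun a b c d => L2 * (dl a b * dl d c).

Lemma P4_UU L2 x : P4 (UU L2) x = L2 * norm2 x ^+ 2.
Proof.
rewrite /P4 /UU c4_tscal pat_ab_dc -norm2_bil expr2 //.
Qed.

Lemma sum_dl1 (i : 'I_N) : \sum_k dl i k = 1 :> R.
Proof. by rewrite -[RHS](sum_dl (fun _ => 1) i); apply: eq_bigr => k _; rewrite mulr1. Qed.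

Lemma sum_1 : \sum_(k < N) (1 : R) = N%:R.
Proof. by rewrite sumr_const card_ord. Qed.

Section E.
Variables (T : curv R N) (L1 L2 : R).
Hypothesis HT : is_curvature_tensor T.
Hypothesis Hrho : forall i j, rho T i j = L1 * dl i j.

Lemma rev4 a b c d : T d c b a = T a b c d.
Proof. by case: HT => s12 s34 pr _; rewrite pr s12 s34 opprK. Qed.

Lemma W3 : \sum_i \sum_k TT T i k k i = inner4 T T.
Proof.
rewrite /TT /inner4 S12 S01.
apply: eq_bigr => a _; apply: eq_bigr => b _; apply: eq_bigr => c _; apply: eq_bigr => d _.
by rewrite rev4.
Qed.

Lemma W4 : \sum_i \sum_k TT T k i i k = inner4 T T.
Proof.
rewrite /TT /inner4 S12 S01 S12.
apply: eq_bigr => a _; apply: eq_bigr => b _; apply: eq_bigr => c _; apply: eq_bigr => d _.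
by rewrite rev4.
Qed.

Lemma W2 : \sum_i \sum_k TT T i k i k = \sum_a \sum_b \sum_c \sum_d (T a b c d * T a c b d).
Proof.
rewrite /TT S12 S01.
apply: eq_bigr => a _; apply: eq_bigr => b _; apply: eq_bigr => c _; apply: eq_bigr => d _.
by rewrite [T d b c a]rev4.
Qed.

Lemma W5 : \sum_i \sum_k TT T k i k i = \sum_a \sum_b \sum_c \sum_d (T a b c d * T a c b d).
Proof.
rewrite /TT S12 S01 S12.
apply: eq_bigr => a _; apply: eq_bigr => b _; apply: eq_bigr => c _; apply: eq_bigr => d _.
by rewrite [T d b c a]rev4.
Qed.

Lemma W1 : \sum_i \sum_k TT T i i k k = N%:R * L1 ^+ 2.
Proof.
rewrite /TT S12 S01 S23 S12.
transitivity (\sum_(a < N) \sum_(b < N) (L1 ^+ 2 * dl a b)).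
  apply: eq_bigr => a _; apply: eq_bigr => b _.
  rewrite -big_distrlr /=.
  have e1 : \sum_i T a i i b = rho T b a.
    by rewrite /rho; apply: eq_bigr => i _; case: HT => _ _ pr _; rewrite pr.
  have e2 : \sum_k T b k k a = rho T a b.
    by rewrite /rho; apply: eq_bigr => i _; case: HT => _ _ pr _; rewrite pr.
  rewrite e1 e2 !Hrho (dl_sym b a).
  transitivity (L1 ^+ 2 * (dl a b * dl a b)); first by ring.
  by rewrite dl_sq.
under eq_bigr do rewrite -mulr_sumr sum_dl1 mulr1.
rewrite sumr_const card_ord -mulr_natr; ring.
Qed.

Lemma W6 : \sum_i \sum_k TT T k k i i = N%:R * L1 ^+ 2.
Proof. by rewrite exchange_big /= W1. Qed.

Lemma sumU : \sum_i \sum_k (UU L2 i i k k + UU L2 i k i k + UU L2 i k k i + UU L2 k i i k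
    + UU L2 k i k i + UU L2 k k i i) = L2 * (2 * N%:R ^+ 2 + 4 * N%:R).
Proof.
rewrite /UU.
transitivity (\sum_(i < N) \sum_(k < N) (2 * L2 + (4 * L2) * dl i k)).
  apply: eq_bigr => i _; apply: eq_bigr => k _.
  rewrite !dl_ii (dl_sym k i) dl_sq; ring.
transitivity (\sum_(i < N) (2 * L2 * N%:R + 4 * L2)).
  apply: eq_bigr => i _; rewrite big_split /= sumr_const card_ord -mulr_sumr sum_dl1.
  rewrite -mulr_natr; ring.
rewrite sumr_const card_ord -mulr_natr; ring.
Qed.

End E.

End Aux9.


Section Aux10.
Variables (R : realFieldType) (N : nat).
Implicit Types (T : curv R N) (x y z w : vec R N).

Lemma sum2_add (F G : 'I_N -> 'I_N -> R) :
  \sum_i \sum_k (F i k + G i k) = \sum_i \sum_k F i k + \sum_i \sum_k G i k.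
Proof. rewrite -big_split; apply: eq_bigr => i _; by rewrite -big_split. Qed.

Lemma E1 T L1 L2 : is_curvature_tensor T -> (forall i j, rho T i j = L1 * dl i j) ->
  (forall x, \sum_a \sum_b Raxxb T x a b * Raxxb T x b a = L2 * norm2 x ^+ 2) ->
  3 * inner4 T T + 2 * (N%:R * L1 ^+ 2) = L2 * (2 * N%:R ^+ 2 + 4 * N%:R).
Proof.
move=> HT Hr H.
have HP : forall x, P4 (TT T) x = P4 (UU L2) x by move=> x; rewrite -quart H P4_UU.
have Hs : forall i k,
  TT T i i k k + TT T i k i k + TT T i k k i + TT T k i i k + TT T k i k i + TT T k k i i =
  UU L2 i i k k + UU L2 i k i k + UU L2 i k k i + UU L2 k i i k + UU L2 k i k i + UU L2 k k i i.
  move=> i k.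
  have h1 := six_basis (TT T) i k; have h2 := six_basis (UU L2) i k.
  rewrite !HP in h1.
  have h3 := HP (ev i); have h4 := HP (ev k).
  rewrite /P4 !c4_ev in h3; rewrite /P4 !c4_ev in h4.
  lra.
have : \sum_(i < N) \sum_(k < N) (TT T i i k k + TT T i k i k + TT T i k k i + TT T k i i k + TT T k i k i + TT T k k i i) =
  \sum_(i < N) \sum_(k < N) (UU L2 i i k k + UU L2 i k i k + UU L2 i k k i + UU L2 k i i k + UU L2 k i k i + UU L2 k k i i).
  by apply: eq_bigr => i _; apply: eq_bigr => k _; apply: Hs.
rewrite sumU !sum2_add (W1 HT Hr) (W2 HT) (W3 HT) (W4 HT) (W5 HT) (W6 HT Hr).
have := Xlem HT.
lra.
Qed.

End Aux10.


Section Aux11.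
Variables (R : realFieldType) (N : nat).
Implicit Types (T : curv R N) (x y z w : vec R N).

Definition lc T (k : R) T' : curv R N := fun a b c d => T a b c d - k * T' a b c d.

Lemma lc_curv T k T' : is_curvature_tensor T -> is_curvature_tensor T' ->
  is_curvature_tensor (lc T k T').
Proof.
case=> a1 a2 a3 a4 [b1 b2 b3 b4]; rewrite /lc; split=> a b c d.
- rewrite a1 b1; ring.
- rewrite a2 b2; ring.
- rewrite a3 b3; ring.
- transitivity ((T a b c d + T b c a d + T c a b d) - k * (T' a b c d + T' b c a d + T' c a b d)).
    ring.
  rewrite a4 b4; ring.
Qed.

Lemma lc_kahler J T k T' : kaehler_identity J T -> kaehler_identity J T' ->
  kaehler_identity J (lc T k T').
Proof.
move=> h1 h2 a b c d; rewrite /lc -(h1 a b c d) -(h2 a b c d) mulr_sumr -sumrB.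
apply: eq_bigr => i _; rewrite mulr_sumr -sumrB; apply: eq_bigr => j _; ring.
Qed.

Lemma c4_lc T k T' x y z w : curv4 (lc T k T') x y z w = curv4 T x y z w - k * curv4 T' x y z w.
Proof.
rewrite (@c4_ext _ _ _ (fun a b c d => T a b c d + (- k) * T' a b c d)); last first.
  by move=> a b c d; rewrite /lc; ring.
by rewrite c4_tadd c4_tscal mulNr.
Qed.

Lemma inner_lc T k T' : inner4 (lc T k T') (lc T k T') =
  inner4 T T - 2 * k * inner4 T T' + k ^+ 2 * inner4 T' T'.
Proof.
rewrite /inner4 /lc.
transitivity (\sum_a \sum_b \sum_c \sum_d (T a b c d * T a b c d
   + (- 2 * k) * (T a b c d * T' a b c d) + k ^+ 2 * (T' a b c d * T' a b c d))).
  by do 4! (apply: eq_bigr => ? _); ring.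
rewrite !sum4_add !sum4_scal; ring.
Qed.

Lemma inner_ge0 T : 0 <= inner4 T T.
Proof.
rewrite /inner4; do 4! (apply: sumr_ge0 => ? _).
by rewrite -expr2 sqr_ge0.
Qed.

Lemma inner_eq0 T : inner4 T T = 0 -> forall a b c d, T a b c d = 0.
Proof.
rewrite /inner4 => h a b c d.
have p4 : forall a b c, 0 <= \sum_d T a b c d * T a b c d.
  by move=> ? ? ?; apply: sumr_ge0 => ? _; rewrite -expr2 sqr_ge0.
have p3 : forall a b, 0 <= \sum_c \sum_d T a b c d * T a b c d.
  by move=> ? ?; apply: sumr_ge0 => ? _; apply: p4.
have p2 : forall a, 0 <= \sum_b \sum_c \sum_d T a b c d * T a b c d.
  by move=> ?; apply: sumr_ge0 => ? _; apply: p3.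
have h1 := psumr_eq0P (fun a _ => p2 a) h (i:=a) isT.
have h2 := psumr_eq0P (fun b _ => p3 a b) h1 (i:=b) isT.
have h3 := psumr_eq0P (fun c _ => p4 a b c) h2 (i:=c) isT.
have h4 := psumr_eq0P (fun d _ => sqr_ge0 (T a b c d)) _ (i:=d) isT.
move: h3; rewrite (eq_bigr (fun d => T a b c d ^+ 2)); last by move=> ? _; rewrite expr2.
by move/h4/eqP; rewrite sqrf_eq0 => /eqP.
Qed.

Lemma scal_R0 (J : 'M[R]_N) : is_hermitian_cs J -> scal (R0 J) = N%:R ^+ 2 + 2 * N%:R.
Proof.
move=> HJ; rewrite /scal /R0.
transitivity (\sum_(a < N) (N%:R + 2 : R)).
  apply: eq_bigr => a _.
  transitivity (\sum_(i < N) (1 + (-1) * dl a i + 3 * (J a i * J a i))).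
    apply: eq_bigr => i _.
    rewrite !dl_ii (dl_sym i a) (J_diag HJ i) (J_asym HJ i a) dl_sq; ring.
  rewrite !big_split /= -!mulr_sumr sum_dl1 (JJt HJ) /dl eqxx sumr_const card_ord.
  rewrite /= mulr1n; ring.
rewrite sumr_const card_ord -mulr_natr; ring.
Qed.

Lemma scal_einstein T L1 : (forall i j, rho T i j = L1 * dl i j) -> scal T = N%:R * L1.
Proof.
move=> H; rewrite /scal exchange_big /=.
transitivity (\sum_(i < N) L1).
  by apply: eq_bigr => i _; have := H i i; rewrite /rho dl_ii mulr1.
rewrite sumr_const card_ord -mulr_natr; ring.
Qed.

End Aux11.


Section Point.
Variables (R : realFieldType) (n : nat).
Local Notation N := n.*2.
Variables (T : curv R N) (J : 'M[R]_N) (L1 L2 : R).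
Hypothesis npos : (0 < n)%N.
Hypothesis HKC : is_kaehler_curvature J T.
Hypothesis HA : asymp_harmonic2_at T L1 L2.

Definition kk := scal T / (n * (n + 1))%:R / 4.
Definition BB := lc T kk (R0 J).
Definition DD := 2 * (n%:R + 1) ^+ 2 * L2 - (n%:R + 7) * L1 ^+ 2.

Lemma key : 3 * (n%:R + 1) * inner4 BB BB = 4 * n%:R * DD.
Proof.
case: HKC => HT HJ HK.
have Hr := einstein HT (fun x => (HA x).1).
have hE1 := E1 HT Hr (fun x => (HA x).2).
have hsc := scal_einstein Hr.
have hiR := inner_R0 HT HJ HK.
have hR0 := inner_R0 (R0_curv HJ) HJ (R0_kahler HJ).
have hs0 := scal_R0 HJ.
have hN : (n.*2)%:R = 2 * n%:R :> R by rewrite -addnn natrD; ring.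
have hiT : inner4 T T = (L2 * (2 * N%:R ^+ 2 + 4 * N%:R) - 2 * (N%:R * L1 ^+ 2)) / 3.
  by rewrite -hE1; field.
rewrite /BB inner_lc hiR hR0 hs0 hiT /kk hsc hN natrM natrD /DD.
have n0 : n%:R != 0 :> R by rewrite pnatr_eq0 -lt0n.
have n1 : n%:R + 1 != 0 :> R by rewrite natr1 pnatr_eq0.
field.
by rewrite n0 n1.
Qed.

Lemma side_nz : (n%:R + 1 != 0 :> R) && (n%:R != 0 :> R).
Proof. rewrite natr1 !pnatr_eq0; by apply/andP; split => //; rewrite -lt0n. Qed.

Lemma holo_of_B0 : inner4 BB BB = 0 -> const_holsec_at J T (scal T / (n * (n + 1))%:R).
Proof.
case: HKC => HT HJ HK.
move=> h0 x _.
have B0 := inner_eq0 h0.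
have eT : forall x y z w, curv4 T x y z w = curv4 BB x y z w + kk * curv4 (R0 J) x y z w.
  by move=> x' y z w; rewrite /BB c4_lc; ring.
rewrite eT (@c4_ext _ _ _ (fun _ _ _ _ => 0)) // c4_zero R0_holo // /kk.
field; exact: side_nz.
Qed.

Lemma B0_of_holo : const_holsec_at J T (scal T / (n * (n + 1))%:R) -> inner4 BB BB = 0.
Proof.
case: HKC => HT HJ HK.
move=> H.
have H0 : forall x, curv4 BB x (Japp J x) (Japp J x) x = 0.
  move=> x; rewrite /BB c4_lc R0_holo //.
  case: (boolP [exists i, x i != 0]) => [/existsP ex | /existsPn hx].
    rewrite H // /kk; field; exact: side_nz.
  have exx : x = vscal 0 x.
    apply: functional_extensionality_dep => i; rewrite /vscal mul0r.
    by have := hx i; rewrite negbK => /eqP.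
  have n0 : norm2 x = 0.
    rewrite /norm2 big1 // => i _; rewrite exx /vscal mul0r expr0n //.
  rewrite n0 {1}exx c4_scal1; ring.
have Bz := B_zero (lc_curv kk HT (R0_curv HJ)) HJ (lc_kahler kk HK (R0_kahler HJ)) H0.
rewrite /inner4 big1 // => a _; rewrite big1 // => b _; rewrite big1 // => c _.
by rewrite big1 // => d _; rewrite /BB Bz mul0r.
Qed.

End Point.

Unset Implicit Arguments.

Theorem theorem6p4 (R : realFieldType) (n : nat) (M : Type) (p0 : M)
    (J : M -> 'M[R]_(n.*2)) (Rm : M -> curv R n.*2) (L1 L2 : R) :
  (0 < n)%N ->
  (forall p, is_kaehler_curvature (J p) (Rm p)) ->
  (forall p, asymp_harmonic2_at (Rm p) L1 L2) ->
  L1 ^+ 2 - (2 * (n + 1) ^ 2)%:R / (n + 7)%:R * L2 <= 0 /\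
  (L1 ^+ 2 - (2 * (n + 1) ^ 2)%:R / (n + 7)%:R * L2 = 0 <->
   forall p, const_holsec_at (J p) (Rm p) (scal (Rm p) / (n * (n + 1))%:R)).
Proof.
move=> npos Hk Ha.
have n0 : n%:R != 0 :> R by rewrite pnatr_eq0 -lt0n.
have n7 : n%:R + 7 != 0 :> R by apply/eqP; have := ler0n R n; lra.
have hE : L1 ^+ 2 - (2 * (n + 1) ^ 2)%:R / (n + 7)%:R * L2 = - DD n L1 L2 / (n%:R + 7).
  rewrite natrM natrX !natrD /DD; field; exact: n7.
have hnp : 0 < n%:R :> R by rewrite ltr0n.
have Ik := fun p => key npos (Hk p) (Ha p).
rewrite hE.
have DD0 : (DD n L1 L2 == 0) = (- DD n L1 L2 / (n%:R + 7) == 0).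
  by rewrite mulf_eq0 invr_eq0 (negbTE n7) orbF oppr_eq0.
split.
  have hD : 0 <= DD n L1 L2.
    have : 0 <= 4 * n%:R * DD n L1 L2.
      rewrite -(Ik p0); apply: mulr_ge0; last exact: inner_ge0.
      by apply: mulr_ge0; rewrite // addr_ge0 // ler0n.
    by rewrite pmulr_rge0 // mulr_gt0.
  by rewrite mulNr oppr_le0 divr_ge0 // addr_ge0 // ler0n.
split.
  move/eqP; rewrite -DD0 => /eqP hD p.
  apply: holo_of_B0 => //.
  have := Ik p; rewrite hD mulr0 => /eqP; rewrite mulf_eq0 => /orP [|/eqP //].
  by rewrite mulf_eq0 pnatr_eq0 /= natr1 pnatr_eq0.
move=> H; apply/eqP; rewrite -DD0.
have := Ik p0; rewrite B0_of_holo // mulr0 => /eqP; rewrite eq_sym mulf_eq0 => /orP [|//].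
by rewrite mulf_eq0 pnatr_eq0 /= (negbTE n0).
Qed.
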